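(* Let $G$ be a cubical $\omega$-category with connections, $m\le n$, and $1\le i\le m-1$. Then, as operators on $G_n$, $\Phi_m\psi_i=\Phi_m$.
   Context: A cubical $\omega$-category with connections $G$ consists of sets $G_n$ ($n\ge0$), face maps $\partial^\alpha_i:G_n\to G_{n-1}$, degeneracies $\varepsilon_i:G_{n-1}\to G_n$, connections $\Gamma^\alpha_i:G_n\to G_{n+1}$ ($1\le i\le n$, $\alpha=\pm$) and partial compositions $\circ_j$ on $G_n$ ($1\le j\le n$, $a\circ_jb$ defined iff $\partial^+_ja=\partial^-_jb$) satisfying: $\partial^\alpha_i\partial^\beta_j=\partial^\beta_{j-1}\partial^\alpha_i$ ($i<j$), $\varepsilon_i\varepsilon_j=\varepsilon_{j+1}\varepsilon_i$ ($i\le j$), $\partial^\alpha_i\varepsilon_j=\varepsilon_{j-1}\partial^\alpha_i$ ($i<j$), $\varepsilon_j\partial^\alpha_{i-1}$ ($i>j$), $\mathrm{id}$ ($i=j$); $\Gamma^\alpha_i\Gamma^\beta_j=\Gamma^\beta_{j+1}\Gamma^\alpha_i$ ($i<j$), $\Gamma^\alpha_i\Gamma^\alpha_i=\Gamma^\alpha_{i+1}\Gamma^\alpha_i$, $\Gamma^\alpha_i\varepsilon_j=\varepsilon_{j+1}\Gamma^\alpha_i$ ($i<j$), $\varepsilon_j\Gamma^\alpha_{i-1}$ ($i>j$), $\Gamma^\alpha_j\varepsilon_j=\varepsilon_{j+1}\varepsilon_j$, $\partial^\alpha_i\Gamma^\beta_j=\Gamma^\beta_{j-1}\partial^\alpha_i$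 ($i<j$), $\Gamma^\beta_j\partial^\alpha_{i-1}$ ($i>j+1$), $\partial^\alpha_j\Gamma^\alpha_j=\partial^\alpha_{j+1}\Gamma^\alpha_j=\mathrm{id}$, $\partial^\alpha_j\Gamma^{-\alpha}_j=\partial^\alpha_{j+1}\Gamma^{-\alpha}_j=\varepsilon_j\partial^\alpha_j$; $\partial^-_j(a\circ_jb)=\partial^-_ja$, $\partial^+_j(a\circ_jb)=\partial^+_jb$, $\partial^\alpha_i(a\circ_jb)=\partial^\alpha_ia\circ_{j-1}\partial^\alpha_ib$ ($i<j$), $\partial^\alpha_ia\circ_j\partial^\alpha_ib$ ($i>j$); interchange for $i\ne j$; $\varepsilon_i(a\circ_jb)=\varepsilon_ia\circ_{j+1}\varepsilon_ib$ ($i\le j$), $\varepsilon_ia\circ_j\varepsilon_ib$ ($i>j$); $\Gamma^\alpha_i(a\circ_jb)=\Gamma^\alpha_ia\circ_{j+1}\Gamma^\alpha_ib$ ($i<j$), $\Gamma^\alpha_ia\circ_j\Gamma^\alpha_ib$ ($i>j$); $\Gamma^+_j(a\circ_jb)=(\Gamma^+_ja\circ_j\varepsilon_ja)\circ_{j+1}(\varepsilon_{j+1}a\circ_j\Gamma^+_jb)$, $\Gamma^-_j(a\circ_jb)=(\Gamma^-_ja\circ_j\varepsilon_{j+1}b)\circ_{j+1}(\varepsilon_jb\circ_j\Gamma^-_jb)$; each $\circ_j$ is a category structure with identities $\varepsilon_jy$; $\Gamma^+_ix\circ_i\Gamma^-_ix=\varepsilon_{i+1}x$, $\Gamma^+_ix\circ_{i+1}\Gamma^-_ix=\varepsilon_ix$.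 Folding operations on $G_n$: $\psi_ix=\Gamma^+_i\partial^-_{i+1}x\circ_{i+1}x\circ_{i+1}\Gamma^-_i\partial^+_{i+1}x$ ($1\le i\le n-1$), $\Psi_r=\psi_{r-1}\psi_{r-2}\cdots\psi_1$ ($1\le r\le n$), $\Phi_m=\Psi_1\Psi_2\cdots\Psi_m=\psi_1(\psi_2\psi_1)\cdots(\psi_{m-1}\cdots\psi_1)$ ($0\le m\le n$). *)

(* Defs.v *)
From mathcomp Require Import all_boot.
Set Implicit Arguments. Unset Strict Implicit. Unset Printing Implicit Defensive.

(* Cubical omega-category with connections.
   - cell n        = G_n
   - face n i a    = d^a_i : G_(n+1) -> G_n      (1 <= i <= n+1); a = true is '+', false is '-'
   - degen n i     = eps_i : G_n -> G_(n+1)      (1 <= i <= n+1)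
   - conn n i a    = Gamma^a_i : G_n -> G_(n+1)  (1 <= i <= n)
   - comp n j x y  = x o_j y on G_n              (1 <= j <= n)
   Composition is a partial operation; it is represented by a total function
   whose values are only constrained (by the axioms) on composable pairs,
   i.e. when  d^+_j x = d^-_j y. *)
Record CubCat := {
  cell : nat -> Type;
  face : forall n : nat, nat -> bool -> cell n.+1 -> cell n;
  degen : forall n : nat, nat -> cell n -> cell n.+1;
  conn : forall n : nat, nat -> bool -> cell n -> cell n.+1;
  comp : forall n : nat, nat -> cell n -> cell n -> cell n;

  face_face : forall n i j a b (x : cell n.+2), 1 <= i -> i < j -> j <= n.+2 ->
    face i a (face j b x) = face j.-1 b (face i a x);
  degen_degen : forall n i j (x : cell n), 1 <= i -> i <= j -> j <= n.+1 ->
    degen i (degen j x) = degen j.+1 (degen i x);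
  face_degen_lt : forall n i j a (x : cell n.+1), 1 <= i -> i < j -> j <= n.+2 ->
    face i a (degen j x) = degen j.-1 (face i a x);
  face_degen_gt : forall n i j a (x : cell n.+1), 1 <= j -> j < i -> i <= n.+2 ->
    face i a (degen j x) = degen j (face i.-1 a x);
  face_degen_eq : forall n i a (x : cell n), 1 <= i -> i <= n.+1 ->
    face i a (degen i x) = x;

  conn_conn_lt : forall n i j a b (x : cell n), 1 <= i -> i < j -> j <= n ->
    conn i a (conn j b x) = conn j.+1 b (conn i a x);
  conn_conn_eq : forall n i a (x : cell n), 1 <= i -> i <= n ->
    conn i a (conn i a x) = conn i.+1 a (conn i a x);
  conn_degen_lt : forall n i j a (x : cell n), 1 <= i -> i < j -> j <= n.+1 ->
    conn i a (degen j x) = degen j.+1 (conn i a x);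
  conn_degen_gt : forall n i j a (x : cell n), 1 <= j -> j < i -> i <= n.+1 ->
    conn i a (degen j x) = degen j (conn i.-1 a x);
  conn_degen_eq : forall n j a (x : cell n), 1 <= j -> j <= n.+1 ->
    conn j a (degen j x) = degen j.+1 (degen j x);
  face_conn_lt : forall n i j a b (x : cell n.+1), 1 <= i -> i < j -> j <= n.+1 ->
    face i a (conn j b x) = conn j.-1 b (face i a x);
  face_conn_gt : forall n i j a b (x : cell n.+1), 1 <= j -> j.+1 < i -> i <= n.+2 ->
    face i a (conn j b x) = conn j b (face i.-1 a x);
  face_conn_same1 : forall n j a (x : cell n), 1 <= j -> j <= n ->
    face j a (conn j a x) = x;
  face_conn_same2 : forall n j a (x : cell n), 1 <= j -> j <= n ->
    face j.+1 a (conn j a x) = x;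
  face_conn_opp1 : forall n j a (x : cell n.+1), 1 <= j -> j <= n.+1 ->
    face j a (conn j (~~ a) x) = degen j (face j a x);
  face_conn_opp2 : forall n j a (x : cell n.+1), 1 <= j -> j <= n.+1 ->
    face j.+1 a (conn j (~~ a) x) = degen j (face j a x);

  face_comp_minus : forall n j (x y : cell n.+1), 1 <= j -> j <= n.+1 ->
    face j true x = face j false y -> face j false (comp j x y) = face j false x;
  face_comp_plus : forall n j (x y : cell n.+1), 1 <= j -> j <= n.+1 ->
    face j true x = face j false y -> face j true (comp j x y) = face j true y;
  face_comp_lt : forall n i j a (x y : cell n.+1), 1 <= i -> i < j -> j <= n.+1 ->
    face j true x = face j false y ->
    face i a (comp j x y) = comp j.-1 (face i a x) (face i a y);
  face_comp_gt : forall n i j a (x y : cell n.+1), 1 <= j -> j < i -> i <= n.+1 ->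
    face j true x = face j false y ->
    face i a (comp j x y) = comp j (face i a x) (face i a y);

  interchange : forall n i j (x y z w : cell n.+1),
    1 <= i -> i <= n.+1 -> 1 <= j -> j <= n.+1 -> i != j ->
    face i true x = face i false y -> face i true z = face i false w ->
    face j true x = face j false z -> face j true y = face j false w ->
    comp j (comp i x y) (comp i z w) = comp i (comp j x z) (comp j y w);

  degen_comp_le : forall n i j (x y : cell n.+1), 1 <= i -> i <= j -> j <= n.+1 ->
    face j true x = face j false y ->
    degen i (comp j x y) = comp j.+1 (degen i x) (degen i y);
  degen_comp_gt : forall n i j (x y : cell n.+1), 1 <= j -> j < i -> i <= n.+2 ->
    face j true x = face j false y ->
    degen i (comp j x y) = comp j (degen i x) (degen i y);

  conn_comp_lt : forall n i j a (x y : cell n.+1), 1 <= i -> i < j -> j <= n.+1 ->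
    face j true x = face j false y ->
    conn i a (comp j x y) = comp j.+1 (conn i a x) (conn i a y);
  conn_comp_gt : forall n i j a (x y : cell n.+1), 1 <= j -> j < i -> i <= n.+1 ->
    face j true x = face j false y ->
    conn i a (comp j x y) = comp j (conn i a x) (conn i a y);
  conn_comp_plus : forall n j (x y : cell n.+1), 1 <= j -> j <= n.+1 ->
    face j true x = face j false y ->
    conn j true (comp j x y) =
      comp j.+1 (comp j (conn j true x) (degen j x))
                (comp j (degen j.+1 x) (conn j true y));
  conn_comp_minus : forall n j (x y : cell n.+1), 1 <= j -> j <= n.+1 ->
    face j true x = face j false y ->
    conn j false (comp j x y) =
      comp j.+1 (comp j (conn j false x) (degen j.+1 y))
                (comp j (degen j y) (conn j false y));

  comp_assoc : forall n j (x y z : cell n.+1), 1 <= j -> j <= n.+1 ->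
    face j true x = face j false y -> face j true y = face j false z ->
    comp j (comp j x y) z = comp j x (comp j y z);
  comp_id_l : forall n j (x : cell n.+1), 1 <= j -> j <= n.+1 ->
    comp j (degen j (face j false x)) x = x;
  comp_id_r : forall n j (x : cell n.+1), 1 <= j -> j <= n.+1 ->
    comp j x (degen j (face j true x)) = x;

  conn_cancel1 : forall n i (x : cell n), 1 <= i -> i <= n ->
    comp i (conn i true x) (conn i false x) = degen i.+1 x;
  conn_cancel2 : forall n i (x : cell n), 1 <= i -> i <= n ->
    comp i.+1 (conn i true x) (conn i false x) = degen i x
}.

Arguments face {_ n}.
Arguments degen {_ n}.
Arguments conn {_ n}.
Arguments comp {_ n}.

(* psi_i x = Gamma^+_i d^-_(i+1) x  o_(i+1)  x  o_(i+1)  Gamma^-_i d^+_(i+1) x,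
   on G_n (n >= 1; on G_0 there is no psi, we put the identity). *)
Definition psi (G : CubCat) (n : nat) : nat -> cell G n -> cell G n :=
  match n return nat -> cell G n -> cell G n with
  | 0 => fun _ x => x
  | k.+1 => fun i x =>
      comp i.+1 (comp i.+1 (conn i true (face i.+1 false x)) x)
                (conn i false (face i.+1 true x))
  end.

(* Psi_r = psi_(r-1) ... psi_1  (Psi_1 = id; Psi_0 := id by convention, unused). *)
Fixpoint Psi (G : CubCat) (n : nat) (r : nat) (x : cell G n) : cell G n :=
  match r with
  | 0 => x
  | r'.+1 => match r' with
             | 0 => x
             | _ => psi r' (Psi r' x)
             end
  end.

Fixpoint Phi (G : CubCat) (n : nat) (m : nat) (x : cell G n) : cell G n :=
  match m with
  | 0 => x
  | m'.+1 => Phi m' (Psi m'.+1 x)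
  end.

(* Main.v *)
Require Import Defs.
From mathcomp Require Import all_boot zify.
Set Implicit Arguments. Unset Strict Implicit.

Notation cmp := Defs.comp.

Lemma psiE (G : CubCat) n i (x : cell G n.+1) :
  psi i x = cmp i.+1 (cmp i.+1 (conn i true (face i.+1 false x)) x)
                     (conn i false (face i.+1 true x)).
Proof. by []. Qed.

Lemma psi_c1 (G : CubCat) n i (x : cell G n.+1) : 1 <= i -> i <= n ->
  face i.+1 true (conn i true (face i.+1 false x)) = face i.+1 false x.
Proof. move=> h1 h2; by rewrite face_conn_same2. Qed.

Lemma psi_c2 (G : CubCat) n i (x : cell G n.+1) : 1 <= i -> i <= n ->
  face i.+1 true (cmp i.+1 (conn i true (face i.+1 false x)) x) =
  face i.+1 false (conn i false (face i.+1 true x)).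
Proof.
move=> h1 h2; rewrite face_comp_plus ?psi_c1 //; try lia.
by rewrite face_conn_same2.
Qed.

Ltac ix := try lia.

Lemma face_psi_gt (G : CubCat) n j k a (x : cell G n.+2) :
  1 <= j -> j.+1 < k -> k <= n.+2 -> face k a (psi j x) = psi j (face k a x).
Proof.
move=> h1 h2 h3; rewrite !psiE.
have c1 := @psi_c1 G n.+1 j x. have c2 := @psi_c2 G n.+1 j x.
rewrite face_comp_gt ?c2 //; ix.
rewrite face_comp_gt ?c1 //; ix.
rewrite !face_conn_gt //; ix.
by rewrite !(face_face (i:=j.+1) (j:=k)) //; ix.
Qed.

Lemma face_psi_m (G : CubCat) n j (x : cell G n.+2) : 1 <= j -> j <= n.+1 ->
  face j.+1 false (psi j x) = degen j (face j false (face j.+1 false x)).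
Proof.
move=> h1 h2; rewrite psiE.
have c1 := @psi_c1 G n.+1 j x h1 h2. have c2 := @psi_c2 G n.+1 j x h1 h2.
rewrite face_comp_minus //; ix. rewrite face_comp_minus //; ix.
by rewrite (face_conn_opp2 false) //; ix.
Qed.

Lemma face_psi_p (G : CubCat) n j (x : cell G n.+2) : 1 <= j -> j <= n.+1 ->
  face j.+1 true (psi j x) = degen j (face j true (face j.+1 true x)).
Proof.
move=> h1 h2; rewrite psiE.
have c1 := @psi_c1 G n.+1 j x h1 h2. have c2 := @psi_c2 G n.+1 j x h1 h2.
rewrite face_comp_plus //; ix.
by rewrite (face_conn_opp2 true) //; ix.
Qed.

Lemma face_psi_lt (G : CubCat) n j k a (x : cell G n.+2) :
  1 <= k -> k <= j -> j <= n -> face k a (psi j.+1 x) = psi j (face k a x).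
Proof.
move=> h1 h2 h3; rewrite !psiE.
have c1 := @psi_c1 G n.+1 j.+1 x. have c2 := @psi_c2 G n.+1 j.+1 x.
rewrite face_comp_lt ?c2 //; ix.
rewrite face_comp_lt ?c1 //; ix.
rewrite !face_conn_lt //; ix.
by rewrite !(face_face (i:=k) (j:=j.+2)) //; ix.
Qed.

Lemma psi_idem (G : CubCat) n j (x : cell G n.+2) : 1 <= j -> j <= n.+1 ->
  psi j (psi j x) = psi j x.
Proof.
move=> h1 h2.
have em := face_psi_m x h1 h2. have ep := face_psi_p x h1 h2.
set y := psi j x in em ep *.
rewrite psiE em conn_degen_eq; ix. rewrite -em comp_id_l; ix.
rewrite ep conn_degen_eq; ix. by rewrite -ep comp_id_r; ix.
Qed.

Lemma ff_gt (G : CubCat) n i k a b (x : cell G n.+2) :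
  1 <= i -> i <= k -> k <= n.+1 ->
  face k a (face i b x) = face i b (face k.+1 a x).
Proof. by move=> *; rewrite (face_face (i:=i) (j:=k.+1)) //; ix. Qed.


Lemma ffR (G : CubCat) n i j a b (x : cell G n.+2) :
  1 <= j -> j <= i -> i <= n.+1 ->
  face i a (face j b x) = face j b (face i.+1 a x).
Proof. by move=> *; rewrite (face_face (i:=j) (j:=i.+1)) //; ix. Qed.

Lemma fco1t (G : CubCat) n j (x : cell G n.+1) : 1 <= j -> j <= n.+1 ->
  face j true (conn j false x) = degen j (face j true x).
Proof. move=> *; exact: (face_conn_opp1 true). Qed.
Lemma fco1f (G : CubCat) n j (x : cell G n.+1) : 1 <= j -> j <= n.+1 ->
  face j false (conn j true x) = degen j (face j false x).
Proof. move=> *; exact: (face_conn_opp1 false). Qed.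
Lemma fco2t (G : CubCat) n j (x : cell G n.+1) : 1 <= j -> j <= n.+1 ->
  face j.+1 true (conn j false x) = degen j (face j true x).
Proof. move=> *; exact: (face_conn_opp2 true). Qed.
Lemma fco2f (G : CubCat) n j (x : cell G n.+1) : 1 <= j -> j <= n.+1 ->
  face j.+1 false (conn j true x) = degen j (face j false x).
Proof. move=> *; exact: (face_conn_opp2 false). Qed.

Lemma idl (G : CubCat) n k (z : cell G n) (y : cell G n.+1) :
  1 <= k -> k <= n.+1 -> z = face k false y -> cmp k (degen k z) y = y.
Proof. move=> h1 h2 ->; exact: comp_id_l. Qed.

Lemma idr (G : CubCat) n k (z : cell G n) (y : cell G n.+1) :
  1 <= k -> k <= n.+1 -> z = face k true y -> cmp k y (degen k z) = y.
Proof. move=> h1 h2 ->; exact: comp_id_r. Qed.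

Lemma idl2 (G : CubCat) n k (z : cell G n) (y : cell G n.+2) :
  1 <= k -> k <= n.+1 -> degen k z = face k false y -> cmp k (degen k.+1 (degen k z)) y = y.
Proof. move=> h1 h2 e; rewrite -degen_degen //; ix. rewrite e; apply: comp_id_l; lia. Qed.

Lemma idr2 (G : CubCat) n k (z : cell G n) (y : cell G n.+2) :
  1 <= k -> k <= n.+1 -> degen k z = face k true y -> cmp k y (degen k.+1 (degen k z)) = y.
Proof. move=> h1 h2 e; rewrite -degen_degen //; ix. rewrite e; apply: comp_id_r; lia. Qed.

Lemma psi_deg (G : CubCat) n j (u : cell G n.+1) : 1 <= j -> j <= n.+1 ->
  psi j (degen j.+1 u) = degen j u.
Proof.
move=> h1 h2; rewrite psiE !face_degen_eq //; ix.
rewrite idr //; ix.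
- by rewrite conn_cancel2.
- by rewrite face_conn_same2.
Qed.

Ltac fsolve := first [
  (fnorm; try done;
  do 3 (try match goal with H : face _ _ _ = face _ _ _ |- _ => progress rewrite H end);
  fnorm; done)
 | (fnorm2; try done;
  do 3 (try match goal with H : face _ _ _ = face _ _ _ |- _ => progress rewrite H end);
  fnorm2; done) ]
with fnorm := repeat (first [fstep | fstep1]; rewrite ?succnK)
with fstep1 :=
  match goal with
  | |- context [face ?i ?a (face ?j ?b ?x)] =>
    rewrite (ffR (i:=i) (j:=j) a b x); [|lia|lia|lia]
  end
with fnorm2 := repeat (first [fstep2 | fstep]; rewrite ?succnK)
with fstep2 :=
  match goal with
  | |- context [face ?i ?a (face ?j ?b ?x)] =>
    rewrite (face_face (i:=i) (j:=j) a b x); [|lia|lia|lia]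
  end
with fstep :=
  match goal with
  | |- context [face ?i ?a (degen ?j ?x)] =>
    first [ rewrite (face_degen_eq (i:=j) a x); [|lia|lia]
          | rewrite (face_degen_lt (i:=i) (j:=j) a x); [|lia|lia|lia]
          | rewrite (face_degen_gt (i:=i) (j:=j) a x); [|lia|lia|lia] ]
  | |- context [face ?i ?a (conn ?j ?b ?x)] =>
    first [ rewrite (face_conn_same1 (j:=j) a x); [|lia|lia]
          | rewrite (face_conn_same2 (j:=j) a x); [|lia|lia]
          | rewrite (fco1t (j:=j) x); [|lia|lia]
          | rewrite (fco1f (j:=j) x); [|lia|lia]
          | rewrite (fco2t (j:=j) x); [|lia|lia]
          | rewrite (fco2f (j:=j) x); [|lia|lia]
          | rewrite (face_conn_lt (i:=i) (j:=j) a b x); [|lia|lia|lia]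
          | rewrite (face_conn_gt (i:=i) (j:=j) a b x); [|lia|lia|lia] ]
  | |- context [face ?i ?a (cmp ?j ?x ?y)] =>
    first [ rewrite (face_comp_minus (j:=j) (x:=x) (y:=y)); [|lia|lia|fsolve]
          | rewrite (face_comp_plus (j:=j) (x:=x) (y:=y)); [|lia|lia|fsolve]
          | rewrite (face_comp_lt (i:=i) (j:=j) a (x:=x) (y:=y)); [|lia|lia|lia|fsolve]
          | rewrite (face_comp_gt (i:=i) (j:=j) a (x:=x) (y:=y)); [|lia|lia|lia|fsolve] ]
  | |- context [face ?i ?a (psi ?j ?x)] =>
    first [ rewrite (face_psi_m (j:=j) x); [|lia|lia]
          | rewrite (face_psi_p (j:=j) x); [|lia|lia]
          | rewrite (face_psi_gt (j:=j) (k:=i) a x); [|lia|lia|lia] ]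
  | |- context [cmp ?k ?y (degen ?k.+1 (degen ?k ?z))] =>
    rewrite (idr2 (k:=k) (z:=z) (y:=y)); [|lia|lia|fsolve]
  | |- context [cmp ?k (degen ?k.+1 (degen ?k ?z)) ?y] =>
    rewrite (idl2 (k:=k) (z:=z) (y:=y)); [|lia|lia|fsolve]
  | |- context [cmp ?k ?y (degen ?k ?z)] =>
    rewrite (idr (k:=k) (z:=z) (y:=y)); [|lia|lia|fsolve]
  | |- context [cmp ?k (degen ?k ?z) ?y] =>
    rewrite (idl (k:=k) (z:=z) (y:=y)); [|lia|lia|fsolve]
  | |- context [psi ?j (degen ?j.+1 ?u)] =>
    rewrite (psi_deg (j:=j) u); [|lia|lia]
  | |- context [conn ?j ?a (degen ?j ?x)] =>
    rewrite (conn_degen_eq (j:=j) a x); [|lia|lia]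
  | |- context [conn ?i ?a (degen ?j ?x)] =>
    first [ rewrite (conn_degen_lt (i:=i) (j:=j) a x); [|lia|lia|lia]
          | rewrite (conn_degen_gt (i:=i) (j:=j) a x); [|lia|lia|lia] ]
  | |- context [degen ?i (degen ?j ?x)] =>
    rewrite (degen_degen (i:=i) (j:=j) x); [|lia|lia|lia]
  end.

Ltac ich i j := rewrite (Defs.interchange (i:=i) (j:=j));
  [| lia | lia | lia | lia | lia | fsolve | fsolve | fsolve | fsolve].

Lemma psi_comp_gt (G : CubCat) n j k (x y : cell G n.+2) :
  1 <= j -> j < k -> k <= n.+1 -> face k.+1 true x = face k.+1 false y ->
  psi j (cmp k.+1 x y) = cmp k.+1 (psi j x) (psi j y).
Proof.
move=> h1 h2 h3 hc; rewrite !psiE.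
rewrite !face_comp_lt //; ix.
rewrite !conn_comp_lt //; ix; rewrite ?succnK; try fsolve.
ich k.+1 j.+1. ich k.+1 j.+1. done.
Qed.

Lemma psi_comp_lt (G : CubCat) n j k (x y : cell G n.+2) :
  1 <= k -> k < j -> j <= n.+1 -> face k true x = face k false y ->
  psi j (cmp k x y) = cmp k (psi j x) (psi j y).
Proof.
move=> h1 h2 h3 hc; rewrite !psiE.
rewrite !face_comp_gt //; ix; try fsolve.
rewrite !conn_comp_gt //; ix; try fsolve.
ich k j.+1. ich k j.+1. done.
Qed.

Lemma psi_conn (G : CubCat) n i j a (y : cell G n.+1) :
  1 <= i -> i < j -> j <= n ->
  psi j.+1 (conn i a y) = conn i a (psi j y).
Proof.
move=> h1 h2 h3; rewrite !psiE.
rewrite !(face_conn_gt (i:=j.+2) (j:=i)) //; ix.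
rewrite -!(conn_conn_lt (i:=i) (j:=j)) //; ix.
rewrite !(conn_comp_lt (i:=i) (j:=j.+1)) //; ix; fsolve.
Qed.

Lemma psi_comm (G : CubCat) n i j (x : cell G n.+2) :
  1 <= i -> i < j -> j <= n ->
  psi j.+1 (psi i x) = psi i (psi j.+1 x).
Proof.
move=> h1 h2 h3; rewrite [psi i x]psiE.
rewrite (psi_comp_lt (j:=j.+1) (k:=i.+1)) //; ix; try fsolve.
rewrite (psi_comp_lt (j:=j.+1) (k:=i.+1)) //; ix; try fsolve.
rewrite !psi_conn //; ix.
rewrite -!(face_psi_lt (j:=j) (k:=i.+1)) //; ix.
Qed.

Lemma conn_comp_plus' (G : CubCat) n j (x y : cell G n.+1) :
  1 <= j -> j <= n.+1 -> face j true x = face j false y ->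
  conn j true (cmp j x y) =
  cmp j.+1 (conn j true x) (cmp j (degen j.+1 x) (conn j true y)).
Proof.
move=> h1 h2 hc; rewrite conn_comp_plus //.
by rewrite idr //; ix; fsolve.
Qed.

Lemma conn_comp_minus' (G : CubCat) n j (x y : cell G n.+1) :
  1 <= j -> j <= n.+1 -> face j true x = face j false y ->
  conn j false (cmp j x y) =
  cmp j.+1 (cmp j (conn j false x) (degen j.+1 y)) (conn j false y).
Proof.
move=> h1 h2 hc; rewrite conn_comp_minus //.
by rewrite (idl (k:=j) (y:=conn j false y)) //; ix; fsolve.
Qed.

Lemma Hp (G : CubCat) n j (c : cell G n.+2) : 1 <= j -> j <= n.+1 ->
  cmp j.+1 (conn j.+1 true (cmp j.+1 c (conn j false (face j.+1 true c))))
           (conn j false (cmp j.+1 c (conn j false (face j.+1 true c)))) =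
  cmp j.+1 (conn j.+1 true c) (conn j false c).
Proof.
move=> h1 h2.
rewrite conn_comp_plus' //; ix; try fsolve.
rewrite (conn_comp_lt (i:=j) (j:=j.+1)) //; ix; try fsolve.
ich j.+2 j.+1.
rewrite comp_assoc //; ix; try fsolve.
rewrite (conn_conn_eq (i:=j) false) //; ix.
rewrite conn_cancel1 //; ix.
rewrite -degen_comp_gt //; ix; try fsolve.
Qed.

Lemma Hm (G : CubCat) n j (d : cell G n.+2) : 1 <= j -> j <= n.+1 ->
  cmp j.+1 (conn j true (cmp j.+1 (conn j true (face j.+1 false d)) d))
           (conn j.+1 false (cmp j.+1 (conn j true (face j.+1 false d)) d)) =
  cmp j.+1 (conn j true d) (conn j.+1 false d).
Proof.
move=> h1 h2.
rewrite (conn_comp_lt (i:=j) (j:=j.+1)) //; ix; try fsolve.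
rewrite conn_comp_minus' //; ix; try fsolve.
ich j.+2 j.+1.
rewrite -comp_assoc //; ix; try fsolve.
rewrite (conn_conn_eq (i:=j) true) //; ix.
rewrite conn_cancel1 //; ix.
rewrite -degen_comp_gt //; ix; try fsolve.
Qed.

Lemma P1 (G : CubCat) n j (q : cell G n.+1) : 1 <= j -> j <= n.+1 ->
  psi j (conn j.+1 true (conn j true q)) = degen j (conn j true q).
Proof.
move=> h1 h2; rewrite -conn_conn_eq //; ix.
rewrite psiE; fnorm. by rewrite conn_cancel2 //; ix.
Qed.

Lemma P2 (G : CubCat) n j (q : cell G n.+1) : 1 <= j -> j <= n.+1 ->
  psi j (conn j.+1 false (conn j false q)) = degen j (conn j false q).
Proof.
move=> h1 h2; rewrite -conn_conn_eq //; ix.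
rewrite psiE; fnorm. by rewrite conn_cancel2 //; ix.
Qed.

Lemma Gp (G : CubCat) n j (c : cell G n.+2) : 1 <= j -> j <= n.+1 ->
  psi j (conn j.+1 true (psi j c)) =
  cmp j.+2 (degen j (conn j true (face j.+1 false c))) (psi j (conn j.+1 true c)).
Proof.
move=> h1 h2; rewrite (psiE j c).
rewrite comp_assoc //; ix; try fsolve.
rewrite conn_comp_plus' //; ix; try fsolve.
rewrite psi_comp_gt //; ix; try fsolve.
rewrite P1 //; ix. congr cmp.
rewrite !psiE. fnorm.
rewrite comp_assoc //; ix; try fsolve.
rewrite comp_assoc //; ix; try fsolve.
by rewrite Hp.
Qed.

Lemma Gm (G : CubCat) n j (d : cell G n.+2) : 1 <= j -> j <= n.+1 ->
  psi j (conn j.+1 false (psi j d)) =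
  cmp j.+2 (psi j (conn j.+1 false d)) (degen j (conn j false (face j.+1 true d))).
Proof.
move=> h1 h2; rewrite (psiE j d).
rewrite conn_comp_minus' //; ix; try fsolve.
rewrite psi_comp_gt //; ix; try fsolve.
rewrite P2 //; ix. congr cmp.
rewrite !psiE. fnorm.
rewrite -comp_assoc //; ix; try fsolve.
by rewrite Hm.
Qed.

Lemma Kform (G : CubCat) n j (x : cell G n.+3) : 1 <= j -> j <= n.+1 ->
  psi j (psi j.+1 (psi j x)) =
  cmp j.+2 (cmp j.+2 (degen j (conn j true (face j.+1 false (face j.+2 false x))))
                     (psi j (psi j.+1 x)))
           (degen j (conn j false (face j.+1 true (face j.+2 true x)))).
Proof.
move=> h1 h2.
rewrite [psi j.+1 (psi j x)]psiE.
rewrite !face_psi_gt //; ix.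
rewrite psi_comp_gt //; ix; try fsolve.
rewrite psi_comp_gt //; ix; try fsolve.
rewrite psi_idem //; ix.
rewrite Gp //; ix. rewrite Gm //; ix.
rewrite [psi j.+1 x]psiE.
rewrite psi_comp_gt //; ix; try fsolve.
rewrite psi_comp_gt //; ix; try fsolve.
rewrite -[X in X = _]comp_assoc //; ix; try fsolve.
congr cmp.
rewrite !comp_assoc //; ix; try fsolve.
Qed.

Lemma Rrel (G : CubCat) n j (x : cell G n.+3) : 1 <= j -> j <= n.+1 ->
  psi j (psi j.+1 (psi j (psi j.+1 x))) = psi j (psi j.+1 (psi j x)).
Proof.
move=> h1 h2; rewrite !Kform //; ix.
rewrite psi_idem //; ix.
fnorm. done.
Qed.


Lemma idemN (G : CubCat) N j (x : cell G N) : 1 <= j -> j < N -> psi j (psi j x) = psi j x.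
Proof. case: N x => [|[|N]] x h1 h2; ix. exact: psi_idem. Qed.

Lemma commN (G : CubCat) N i j (x : cell G N) : 1 <= i -> i.+1 < j -> j < N ->
  psi j (psi i x) = psi i (psi j x).
Proof.
case: N x => [|[|N]] x h1 h2 h3; ix. case: j h2 h3 => [|j] h2 h3; ix.
apply: psi_comm; lia.
Qed.

Lemma RN (G : CubCat) N j (x : cell G N) : 1 <= j -> j.+1 < N ->
  psi j (psi j.+1 (psi j (psi j.+1 x))) = psi j (psi j.+1 (psi j x)).
Proof. case: N x => [|[|[|N]]] x h1 h2; ix. apply: Rrel; lia. Qed.

Fixpoint U (G : CubCat) N (a k : nat) (x : cell G N) : cell G N :=
  match k with 0 => x | k'.+1 => psi (a + k').+1 (U a k' x) end.

Lemma PsiU (G : CubCat) N r (x : cell G N) : Psi r.+1 x = U 0 r x.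
Proof. elim: r => [|r IH] //. rewrite [U _ _ _]/= -IH. by []. Qed.

Lemma PhiS (G : CubCat) N m (x : cell G N) : Phi m.+1 x = Phi m (Psi m.+1 x).
Proof. by []. Qed.

Lemma Usplit (G : CubCat) N a k (x : cell G N) : U 0 (a + k) x = U a k (U 0 a x).
Proof. elim: k => [|k IH] /=; first by rewrite addn0. by rewrite addnS /= IH add0n. Qed.

Lemma Ucomm (G : CubCat) N a j k (y : cell G N) :
  (j.+1 <= a \/ a + k + 2 <= j) -> 1 <= j -> j < N -> a + k < N ->
  U a k (psi j y) = psi j (U a k y).
Proof.
move=> hj h1 h2; elim: k hj => [|k IH] hj hk //=.
rewrite IH; [|lia|lia].
case: hj => hj.
- by rewrite commN //; lia.
- by rewrite -commN //; lia.
Qed.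

Lemma Usplit' (G : CubCat) N a k (x : cell G N) : a <= k -> U 0 k x = U a (k - a) (U 0 a x).
Proof. move=> h; rewrite -Usplit; congr U; lia. Qed.

Theorem theorem5p4 (G : CubCat) (n m i : nat) :
  m <= n -> 1 <= i -> i <= m - 1 ->
  forall x : cell G n, Phi m (psi i x) = Phi m x.
Proof.
elim: m i => [|m IH] i hm h1 h2 x; first lia.
rewrite !PhiS !PsiU.
rewrite (Usplit' (a:=i) (k:=m) (psi i x)) ?(Usplit' (a:=i) (k:=m) x); try lia.
case: i h1 h2 => [|[|i]] h1 h2; first lia.
- by rewrite /= idemN //; lia.
- rewrite /= !add0n (Ucomm (a:=0) (k:=i)); [|lia|lia|lia|lia].
  have hm' : m <= n by lia.
  rewrite -(IH i.+1 hm' _ _ (U i.+2 (m - i.+2) _)); [|lia|lia].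
  rewrite -(Ucomm (a:=i.+2)); [|lia|lia|lia|lia].
  rewrite RN; [|lia|lia].
  rewrite (Ucomm (a:=i.+2)); [|lia|lia|lia|lia].
  rewrite (IH i.+1 hm'); [|lia|lia].
  done.
Qed.
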